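(* Let $F$ be a sensori-computational device with observation variator $(D,\bowtie)$ for $Y(F)$. Suppose $\bowtie$ is single-valued in its third argument, i.e., $(y,d,y')\in\bowtie$ and $(y,d,y'')\in\bowtie$ imply $y'=y''$, and suppose the delta relation $\Delta_F^{D}$ is left-total on $\mathcal{L}(F)$ (every $s\in\mathcal{L}(F)$ is related to some string). Then there exists a sensori-computational device $F'$ that output simulates $F$ modulo $\Delta_F^{D}$.
   Context: A sensori-computational device is a 6-tuple $F=(V,V_0,Y,\tau,C,c)$ where $V$ is a non-empty finite set of states, $V_0\subseteq V$ a non-empty set of initial states, $Y=Y(F)$ a finite set of observations, $\tau:V\times V\to\mathcal{P}(Y)$, $C$ a set of outputs, $c:V\to\mathcal{P}(C)\setminus\{\emptyset\}$. A string $y_1\cdots y_n$ reaches $w$ from $v$ if there are states $w_0=v,\dots,w_n=w$ with $y_i\in\tau(w_{i-1},w_i)$; $\mathcal{R}_F(s)$ is the set of states reached by $s$ from some initial state; $\mathcal{L}(F)=\{s\in Y^*:\mathcal{R}_F(s)\ne\emptyset\}$; $\mathcal{C}_F(s)=\bigcup_{v\in\mathcal{R}_F(s)}c(v)$. For a relation $R\subseteq A\times B$ between sets of strings, $F'$ output simulates $F$ modulo $R$ if for every $s\in\mathcal{L}(F)$: (1) some $t\in\mathcal{L}(F')$ has $s\,R\,t$; (2) every $t\in B$ with $s\,R\,t$ satisfies $t\in\mathcal{L}(F')$ and $\mathcal{C}_F(s)\supseteq\mathcal{C}_{F'}(t)$. An observation variator for $Y$ is a set $D$ with a ternary relation $\bowtie\subseteq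 Y\times D\times Y$. The delta relation $\Delta_F^{D}\subseteq\mathcal{L}(F)\times(\{\epsilon\}\cup Y\cdot D^* )$ consists of: $(\epsilon,\epsilon)$; $(y_0,y_0)$ for each $y_0\in Y\cap\mathcal{L}(F)$; and $(y_0y_1\cdots y_m,\ y_0d_1\cdots d_m)$ for $y_0\cdots y_m\in\mathcal{L}(F)$, $m\ge1$, whenever $(y_{k-1},d_k,y_k)\in\bowtie$ for all $k$. *)

(* Defs.v *)
From mathcomp Require Import all_boot.
Set Implicit Arguments. Unset Strict Implicit. Unset Printing Implicit Defensive.

Record device (Y : finType) (C : Type) := Device {
  dV : finType;
  dV0 : {set dV};
  dV0_nonempty : dV0 != set0;
  dtau : dV -> dV -> {set Y};
  dc : dV -> C -> Prop;
  dc_nonempty : forall v, exists o, dc v o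
}.

Section Dev.
Variables (Y : finType) (C : Type) (F : device Y C).

Fixpoint reaches (v : dV F) (s : seq Y) (w : dV F) : Prop :=
  match s with
  | [::] => v = w
  | y :: s' => exists u, y \in dtau v u /\ reaches u s' w
  end.

Definition reached (s : seq Y) (w : dV F) : Prop :=
  exists2 v0, v0 \in dV0 F & reaches v0 s w.

Definition inL (s : seq Y) : Prop := exists w, reached s w.

Definition outC (s : seq Y) (o : C) : Prop := exists2 v, reached s v & dc v o.
End Dev.

Definition output_simulates (Y Y' : finType) (C : Type)
    (F : device Y C) (F' : device Y' C) (R : seq Y -> seq Y' -> Prop) : Prop :=
  forall s, inL F s ->
    (exists t, inL F' t /\ R s t) /\
    (forall t, R s t -> inL F' t /\ (forall o, outC F' t o -> outC F s o)).

Fixpoint vchain (Y D : Type) (bowtie : Y -> D -> Y -> Prop)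
    (y : Y) (ys : seq Y) (ds : seq D) : Prop :=
  match ys, ds with
  | [::], [::] => True
  | y' :: ys', d :: ds' => bowtie y d y' /\ vchain bowtie y' ys' ds'
  | _, _ => False
  end.

(* The delta relation Delta_F^D, subset of L(F) x ({eps} \cup Y . D^* );
   strings of the target live over the alphabet Y + D. *)
Definition delta_rel (Y D : finType) (C : Type) (F : device Y C)
    (bowtie : Y -> D -> Y -> Prop) (s : seq Y) (t : seq (Y + D)%type) : Prop :=
  inL F s /\
  match s with
  | [::] => t = [::]
  | y0 :: ys => exists2 ds, t = inl y0 :: map inr ds & vchain bowtie y0 ys ds
  end.

(* Main.v *)
Require Import Defs.
From mathcomp Require Import all_boot.
From Stdlib Require Import ClassicalEpsilon.
Set Implicit Arguments. Unset Strict Implicit.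

Definition pb (P : Prop) : bool :=
  if excluded_middle_informative P then true else false.
Lemma pbP P : pb P <-> P.
Proof. rewrite /pb; case: excluded_middle_informative => //; split => //. Qed.

Section S.
Variables (Y D : finType) (C : Type) (F : device Y C) (bowtie : Y -> D -> Y -> Prop).

Definition St := option (dV F * Y)%type.

Definition tr (x x' : St) (a : Y + D) : Prop :=
  match x, x', a with
  | None, Some (w, y'), inl y0 => y0 = y' /\ exists2 v0, v0 \in dV0 F & y0 \in dtau v0 w
  | Some (u, y), Some (w, y'), inr d => bowtie y d y' /\ y' \in dtau u w
  | _, _, _ => False
  end.
Definition tau' (x x' : St) : {set Y + D} := [set a | pb (tr x x' a)].
Definition c' (x : St) (o : C) : Prop :=
  match x with
  | None => exists2 v0, v0 \in dV0 F & dc v0 o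
  | Some (v, _) => dc v o
  end.
Lemma c'_ne x : exists o, c' x o.
Proof.
case: x => [[v y]|] /=; first exact: dc_nonempty.
have/set0Pn [v0 Hv0] := dV0_nonempty F.
have [o Ho] := dc_nonempty v0. by exists o; exists v0.
Qed.
Lemma V0'_ne : [set None : St] != set0.
Proof. apply/set0Pn; exists None; by rewrite inE. Qed.

Definition F' := @Device (Y + D)%type C St [set None] V0'_ne tau' c' c'_ne.

Lemma fw u y ys ds w : vchain bowtie y ys ds -> reaches u ys w ->
  reaches (F := F') (Some (u, y)) (map inr ds) (Some (w, last y ys)).
Proof.
elim: ys ds u y => [|y1 ys IH] [|d ds] u y //=.
  by move=> _ ->.
move=> [Hb Hc] [u1 [Hin Hr]].
exists (Some (u1, y1)); split; last exact: IH.
by rewrite inE; apply/pbP; simpl; split.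
Qed.

Lemma bw ds u y x : reaches (F := F') (Some (u, y)) (map inr ds) x ->
  exists w ys, x = Some (w, last y ys) /\ vchain bowtie y ys ds /\ reaches u ys w.
Proof.
elim: ds u y => [|d ds IH] u y /=.
  by move=> <-; exists u, [::].
move=> [x1 [Hin Hr]]. move: Hin; rewrite inE => /pbP.
case: x1 Hr => [[u1 y1]|] Hr //= [Hb Hc].
have [w [ys [-> [Hv Hrr]]]] := IH _ _ Hr.
exists w, (y1 :: ys); split => //; split; first by split.
by exists u1.
Qed.

Lemma vuniq (Hsv : forall y d y' y'', bowtie y d y' -> bowtie y d y'' -> y' = y'')
  y ys ys' ds : vchain bowtie y ys ds -> vchain bowtie y ys' ds -> ys = ys'.
Proof.
elim: ys ys' ds y => [|a ys IH] [|a' ys'] [|d ds] y //=.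
move=> [H1 H2] [H1' H2']. have E := Hsv _ _ _ _ H1 H1'. subst a'.
by rewrite (IH _ _ _ H2 H2').
Qed.

Lemma part2 (Hsv : forall y d y' y'', bowtie y d y' -> bowtie y d y'' -> y' = y'')
  s t : delta_rel F bowtie s t ->
  inL F' t /\ (forall o, outC F' t o -> outC F s o).
Proof.
case=> [[w [v0 Hv0 Hr]]]. case: s Hr => [|y0 ys] Hr.
- move=> ->; split.
    by exists None; exists None; rewrite ?inE.
  move=> o [x [x0 Hx0 Hrx] Hc]. move: Hx0; rewrite inE => /eqP Hx0; subst.
  simpl in Hrx; subst x. case: Hc => v1 Hv1 Hc1. exists v1 => //. by exists v1.
- move=> [ds -> Hv]. case: Hr => u [Hin Hr]. split.
    exists (Some (w, last y0 ys)); exists None; first by rewrite inE.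
    exists (Some (u, y0)); split; last exact: fw.
    rewrite inE; apply/pbP; simpl; split => //; by exists v0.
  move=> o [x [x0 Hx0 Hrx] Hc]. move: Hx0; rewrite inE => /eqP Hx0; subst x0.
  case: Hrx => x1 [Hin1 Hr1]. move: Hin1; rewrite inE => /pbP.
  case: x1 Hr1 => [[u1 y1]|] Hr1 //= [E [v1 Hv1 Hin1]]. subst y1.
  have [w' [ys' [Ex [Hv' Hr']]]] := bw Hr1.
  have E := vuniq Hsv Hv Hv'. subst ys' x.
  exists w'; last exact: Hc.
  exists v1 => //. by exists u1.
Qed.
End S.

Theorem proposition1 (Y D : finType) (C : Type) (F : device Y C)
    (bowtie : Y -> D -> Y -> Prop)
    (Hsv : forall y d y' y'', bowtie y d y' -> bowtie y d y'' -> y' = y'')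
    (Htot : forall s, inL F s -> exists t, delta_rel F bowtie s t) :
  exists F' : device (Y + D)%type C, output_simulates F F' (delta_rel F bowtie).
Proof.
exists (F' F bowtie) => s Hs; split.
  have [t Ht] := Htot s Hs. exists t; split => //. exact: (part2 Hsv Ht).1.
move=> t Ht; exact: part2.
Qed.
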